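(* Let $K$ be a spherically complete non-Archimedean field with value group $|K^\times|=\mathbb{R}_{>0}$. Then every almost finite free $K^{\circ,a}$-module is isomorphic, in the category of almost $K^{\circ}$-modules, to a finite direct sum of copies of $K^{\circ,a}$.
   Context: A non-Archimedean field is a field complete for a nontrivial rank-one non-Archimedean absolute value; it is spherically complete if every decreasing sequence of closed balls has nonempty intersection. $K^\circ=\{x:|x|\le1\}$ and $K^{\circ\circ}=\{x:|x|<1\}$. Almost mathematics is relative to $(K^\circ,K^{\circ\circ})$: the category of almost $K^\circ$-modules is the Serre quotient of $K^\circ$-modules by the modules annihilated by $K^{\circ\circ}$, and $K^{\circ,a}$ is the image of $K^\circ$. An almost $K^{\circ,a}$-module $M$ is almost finite free of rank $r$ if for every finitely generated ideal $I_0\subseteq K^{\circ\circ}$ there is a morphism $(K^{\circ,a})^r\to M$ whose kernel and cokernel are annihilated by $I_0$. *)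

(* Defs.v *)
From HB Require Import structures.
From mathcomp Require Import all_boot all_order all_algebra.
From mathcomp Require Import reals.
Set Implicit Arguments. Unset Strict Implicit. Unset Printing Implicit Defensive.
Import Order.TTheory GRing.Theory Num.Theory.
Local Open Scope ring_scope.

Section NonArch.
Variables (R : realType) (K : fieldType) (abs : K -> R).

Definition nonarch_field : Prop :=
  (forall x, 0 <= abs x) /\
  (forall x, abs x = 0 <-> x = 0) /\
  (forall x y, abs (x * y) = abs x * abs y) /\
  (forall x y, abs (x + y) <= Num.max (abs x) (abs y)) /\
  (exists x, abs x != 0 /\ abs x != 1) /\
      (forall u : nat -> K,
         (forall e, 0 < e -> exists N, forall m n, (N <= m)%N -> (N <= n)%N ->
              abs (u m - u n) < e) ->
         exists l, forall e, 0 < e -> exists N, forall n, (N <= n)%N ->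
              abs (u n - l) < e).

Definition cball (c : K) (r : R) (x : K) : Prop := abs (x - c) <= r.

Definition spherically_complete : Prop :=
  forall (c : nat -> K) (r : nat -> R),
    (forall n, 0 < r n) ->
    (forall n x, cball (c n.+1) (r n.+1) x -> cball (c n) (r n) x) ->
    exists x, forall n, cball (c n) (r n) x.

Definition value_group_full : Prop :=
  forall t : R, (exists x, x != 0 /\ abs x = t) <-> 0 < t.

Definition intring := {x : K | abs x <= 1}.

Definition in_mideal (a : intring) : Prop := abs (val a) < 1.

Record omod := OMod {
  mty :> zmodType;
  mact : intring -> mty -> mty;
  mactDr : forall a (x y : mty), mact a (x + y) = mact a x + mact a y;
  mactDl : forall a b c (x : mty), val c = val a + val b ->
             mact c x = mact a x + mact b x;
  mactA : forall a b c (x : mty), val c = val a * val b ->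
             mact c x = mact a (mact b x);
  mact1 : forall a (x : mty), val a = 1 -> mact a x = x
}.

Definition olinear (X M : omod) (f : X -> M) : Prop :=
  (forall x y, f (x + y) = f x + f y) /\
  (forall a x, f (mact a x) = mact a (f x)).

(* K°-linear maps X -> (K°)^r, given by their r coordinates *)
Definition olinear_free (X : omod) (r : nat) (s : 'I_r -> X -> intring) : Prop :=
  forall i, (forall x y, val (s i (x + y)) = val (s i x) + val (s i y)) /\
            (forall a x, val (s i (mact a x)) = val a * val (s i x)).

(* kernel and cokernel almost zero (killed by K°°): an almost isomorphism *)
Definition almost_iso (X M : omod) (f : X -> M) : Prop :=
  [/\ olinear f,
      (forall e x, in_mideal e -> f x = 0 -> mact e x = 0) &
      (forall e y, in_mideal e -> exists x, f x = mact e y)].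

Definition almost_iso_free (X : omod) (r : nat) (s : 'I_r -> X -> intring) : Prop :=
  [/\ olinear_free s,
      (forall e x, in_mideal e -> (forall i, val (s i x) = 0) -> mact e x = 0) &
      (forall e (v : 'I_r -> intring), in_mideal e ->
          exists x, forall i, val (s i x) = val e * val (v i))].

(* A morphism (K°^a)^r -> M^a in the category of almost modules is a roof
   (K°)^r <-s- X -f-> M with s an almost isomorphism.  Its kernel and cokernel
   are (ker f)^a and (coker f)^a.  "Annihilated by I0 = (g_1,...,g_k)" in the
   almost category means that e * g_j kills the module for all e in K°°. *)
Definition almost_finite_free (M : omod) (r : nat) : Prop :=
  forall gs : seq intring, (forall g, g \in gs -> in_mideal g) ->
  exists (X : omod) (s : 'I_r -> X -> intring) (f : X -> M),
    [/\ almost_iso_free s, olinear f,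
        (forall g e x, g \in gs -> in_mideal e -> f x = 0 ->
            mact e (mact g x) = 0) &
        (forall g e y, g \in gs -> in_mideal e ->
            exists x, f x = mact e (mact g y))].

Definition almost_iso_to_free (M : omod) (n : nat) : Prop :=
  exists (X : omod) (s : 'I_n -> X -> intring) (f : X -> M),
    almost_iso_free s /\ almost_iso f.

End NonArch.

(* Main.v *)
Require Import Defs.
From HB Require Import structures.
From mathcomp Require Import all_boot all_order all_algebra.
From mathcomp Require Import reals.
From mathcomp Require Import classical_sets boolp.
From mathcomp Require Import ring lra.
Set Implicit Arguments. Unset Strict Implicit. Unset Printing Implicit Defensive.
Import Order.TTheory GRing.Theory Num.Theory.
Local Open Scope ring_scope.

Section Basics.
Variables (R : realType) (K : fieldType) (abs : K -> R).
Hypothesis hK : nonarch_field abs.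
Hypothesis hval : value_group_full abs.

Lemma abs_ge0 x : 0 <= abs x. Proof. by case: hK. Qed.
Lemma abs0P x : abs x = 0 <-> x = 0. Proof. by case: hK => _ []. Qed.
Lemma absM x y : abs (x * y) = abs x * abs y. Proof. by case: hK => _ [] _ []. Qed.
Lemma absD x y : abs (x + y) <= Num.max (abs x) (abs y).
Proof. by case: hK => _ [] _ [] _ []. Qed.
Lemma abs0 : abs 0 = 0. Proof. exact/abs0P. Qed.
Lemma abs_neq0 x : x != 0 -> abs x != 0.
Proof. by move=> /eqP h; apply/eqP => /abs0P. Qed.
Lemma abs_gt0 x : x != 0 -> 0 < abs x.
Proof. by move=> /abs_neq0 h; rewrite lt_def h abs_ge0. Qed.
Lemma abs1 : abs 1 = 1.
Proof.
have h := absM 1 1; rewrite mulr1 in h.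
have h0 : abs 1 != 0 by apply: abs_neq0; exact: oner_neq0.
have : abs 1 * (abs 1 - 1) = 0 by rewrite mulrBr mulr1 -h subrr.
by move/eqP; rewrite mulf_eq0 (negPf h0) /= subr_eq0 => /eqP.
Qed.
Lemma absN x : abs (- x) = abs x.
Proof.
have h1 : abs (-1) * abs (-1) = 1 by rewrite -absM mulrNN mulr1 abs1.
have h2 := abs_ge0 (-1).
have e : abs (-1) = 1 by nra.
by rewrite -mulN1r absM e mul1r.
Qed.
Lemma absB x y : abs (x - y) = abs (y - x).
Proof. by rewrite -absN opprB. Qed.
Lemma absV x : abs (x^-1) = (abs x)^-1.
Proof.
have [->|nz] := eqVneq x 0; first by rewrite invr0 abs0 invr0.
have h : abs x * abs (x^-1) = 1 by rewrite -absM mulfV // abs1.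
have hx := abs_neq0 nz.
by rewrite -[abs (x^-1)]mul1r -(mulVf hx) -mulrA h mulr1.
Qed.
Lemma absD_le x y t : abs x <= t -> abs y <= t -> abs (x + y) <= t.
Proof. move=> h1 h2; apply: le_trans (absD x y) _; by rewrite ge_max h1 h2. Qed.
Lemma absD_lt x y t : abs x < t -> abs y < t -> abs (x + y) < t.
Proof. move=> h1 h2; apply: le_lt_trans (absD x y) _; by rewrite gt_max h1 h2. Qed.
Lemma ex_abs t : 0 < t -> exists x, x != 0 /\ abs x = t.
Proof. by move=> /(proj2 (hval t)) [x [/eqP h1 h2]]; exists x; split => //; apply/eqP. Qed.
End Basics.

Section GS.
Local Open Scope classical_set_scope.
Local Open Scope ring_scope.
Variables (R : realType) (K : fieldType) (abs : K -> R).
Hypothesis hK : nonarch_field abs.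
Hypothesis hsph : spherically_complete abs.
Hypothesis hval : value_group_full abs.
Variable r : nat.
Variable N : 'rV[K]_r -> R.
Hypothesis N_ge0 : forall u, 0 <= N u.
Hypothesis NZ : forall c u, N (c *: u) = abs c * N u.
Hypothesis ND : forall u v, N (u + v) <= Num.max (N u) (N v).
Hypothesis N_pos : forall u, u != 0 -> 0 < N u.

Lemma N0 : N 0 = 0.
Proof. by rewrite -(scale0r (0 : 'rV[K]_r)) NZ abs0 // mul0r. Qed.
Lemma NN u : N (- u) = N u.
Proof. by rewrite -scaleN1r NZ absN // abs1 // mul1r. Qed.
Lemma NB u v : N (u - v) <= Num.max (N u) (N v).
Proof. by rewrite -(NN v); apply: ND. Qed.

Definition supp j (l : 'rV[K]_r) := forall i : 'I_r, (j <= i)%N -> l 0 i = 0.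
Definition orth j (B : 'M[K]_r) := forall l, supp j l ->
  (forall i, abs (l 0 i) <= N (l *m B)) /\
  (forall t, 0 <= t -> (forall i, abs (l 0 i) <= t) -> N (l *m B) <= t).
Definition tri j (B : 'M[K]_r) := forall i k : 'I_r, (i < j)%N -> (i < k)%N -> B i k = 0.
Definition dia j (B : 'M[K]_r) := forall i : 'I_r, (i < j)%N -> B i i != 0.

Lemma suppD j l l' : supp j l -> supp j l' -> supp j (l + l').
Proof. by move=> h h' i hi; rewrite mxE h // h' // addr0. Qed.
Lemma suppZ j c l : supp j l -> supp j (c *: l).
Proof. by move=> h i hi; rewrite mxE h // mulr0. Qed.
Lemma suppN j l : supp j l -> supp j (- l).
Proof. by move=> h i hi; rewrite mxE h // oppr0. Qed.

Lemma minimize j B : orth j B -> forall e : 'rV[K]_r,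
  exists ls, supp j ls /\ forall l, supp j l -> N (e - ls *m B) <= N (e - l *m B).
Proof.
move=> hB e.
pose S : set R := fun x => exists l, supp j l /\ x = N (e - l *m B).
have S0 : S !=set0 by exists (N (e - 0 *m B)); exists 0; split => // i _; rewrite mxE.
have Slb : forall x, S x -> 0 <= x by move=> x [l [_ ->]].
have hlb : has_lbound S by exists 0 => x /Slb.
set d := inf S.
have d0 : 0 <= d by apply: lb_le_inf => // x /Slb.
pose rho (n : nat) : R := d + (n.+1%:R)^-1.
have rho_gt0 n : 0 < rho n by rewrite /rho; apply: ltr_wpDl => //; rewrite invr_gt0.
have rho_dec n : rho n.+1 <= rho n.
  rewrite /rho lerD2l lef_pV2 ?posrE // ler_nat; exact: leqnSn.
have ex n : exists l, supp j l /\ N (e - l *m B) < rho n.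
  have : inf S < rho n by rewrite /rho ltrDl invr_gt0.
  by move=> /(inf_lt S0) [x [l [hl ->]] hx]; exists l.
pose lam n := proj1_sig (cid (ex n)).
have lamP n : supp j (lam n) /\ N (e - lam n *m B) < rho n := proj2_sig (cid (ex n)).
have near n : N ((lam n.+1 - lam n) *m B) < rho n.
  have -> : (lam n.+1 - lam n) *m B = (e - lam n *m B) - (e - lam n.+1 *m B).
    by rewrite mulmxBl opprB [RHS]addrC addrA subrK.
  apply: le_lt_trans (NB _ _) _; rewrite gt_max (proj2 (lamP n)) /=.
  exact: lt_le_trans (proj2 (lamP n.+1)) (rho_dec n).
have coord i : exists x, forall n, cball abs (lam n 0 i) (rho n) x.
  apply: hsph => // n x; rewrite /cball => hx.
  have -> : x - lam n 0 i = (x - lam n.+1 0 i) + (lam n.+1 0 i - lam n 0 i) by rewrite addrA subrK.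
  apply: absD_le => //; first exact: le_trans hx (rho_dec n).
  have hs : supp j (lam n.+1 - lam n) by apply: suppD; [exact: (proj1 (lamP _)) | apply: suppN; exact: (proj1 (lamP _))].
  have := proj1 (hB _ hs) i; rewrite !mxE => h.
  exact: ltW (le_lt_trans h (near n)).
have [x hx] := fin_all_exists coord.
pose ls := \row_i (if (i < j)%N then x i else 0).
have hls : supp j ls by move=> i hi; rewrite mxE ltnNge hi.
exists ls; split => // l hl.
have key : forall n, N (e - ls *m B) <= rho n.
  move=> n.
  have -> : e - ls *m B = (e - lam n *m B) + (lam n - ls) *m B.
    by rewrite mulmxBl addrA subrK.
  apply: le_trans (ND _ _) _; rewrite ge_max (ltW (proj2 (lamP n))) /=.
  have hs : supp j (lam n - ls) by apply: suppD; [exact: (proj1 (lamP _)) | exact: suppN].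
  apply: (proj2 (hB _ hs)); first exact: ltW.
  move=> i; rewrite !mxE; case: ifP => hi.
    by rewrite absB //; exact: hx.
  rewrite (proj1 (lamP n)) ?subr0 ?abs0 //; first exact: ltW.
  by rewrite leqNgt hi.
have le_d : N (e - ls *m B) <= d.
  rewrite leNgt; apply/negP => /ltr_add_invr [k hk].
  by have := key k; rewrite /rho leNgt hk.
apply: le_trans le_d _.
by apply: ge_inf => //; exists l.
Qed.


Lemma GS_step j B (hj : (j < r)%N) : orth j B -> tri j B -> dia j B ->
  exists B', [/\ orth j.+1 B', tri j.+1 B' & dia j.+1 B'].
Proof.
move=> hO hT hD.
pose jo := Ordinal hj.
pose e : 'rV[K]_r := delta_mx 0 jo.
have [ls [hls hmin]] := minimize hO e.
pose b' := e - ls *m B.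
have lsB0 : forall l (k : 'I_r), supp j l -> (j <= k)%N -> (l *m B) 0 k = 0.
  move=> l k hl hk; rewrite mxE; apply: big1 => i _.
  case: (ltnP i j) => hi; first by rewrite hT ?mulr0 //; exact: leq_trans hi hk.
  by rewrite hl // mul0r.
have subE : forall (u v : 'rV[K]_r) k, (u - v) 0 k = u 0 k - v 0 k by move=> u v k; rewrite !mxE.
have b'j : b' 0 jo = 1.
  by rewrite subE lsB0 //= mxE !eqxx /= subr0.
have b'k : forall k : 'I_r, (j < k)%N -> b' 0 k = 0.
  move=> k hk; rewrite subE lsB0 ?(ltnW hk) // mxE.
  have -> : (k == jo) = false by apply/negP => /eqP h; rewrite h /= ltnn in hk.
  by rewrite andbF subr0.
have b'nz : b' != 0 by apply/negP => /eqP h; move: b'j; rewrite h mxE => /eqP; rewrite eq_sym oner_eq0.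
have Nb' := N_pos b'nz.
have : 0 < (N b')^-1 by rewrite invr_gt0.
move=> /(ex_abs hval) [c [cnz hc]].
pose bj := c *: b'.
have minb : forall l, supp j l -> N b' <= N (b' - l *m B).
  move=> l hl; have -> : b' - l *m B = e - (ls + l) *m B by rewrite mulmxDl opprD addrA.
  by apply: hmin; apply: suppD.
have claim : forall l a, supp j l ->
   [/\ abs a * N b' <= N (a *: b' + l *m B), N (l *m B) <= N (a *: b' + l *m B)
     & N (a *: b' + l *m B) <= Num.max (abs a * N b') (N (l *m B))].
  move=> l a hl.
  have up : N (a *: b' + l *m B) <= Num.max (abs a * N b') (N (l *m B)) by rewrite -NZ; apply: ND.
  have low1 : abs a * N b' <= N (a *: b' + l *m B).
    have [->|anz] := eqVneq a 0; first by rewrite abs0 // mul0r.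
    have -> : a *: b' + l *m B = a *: (b' - (- a^-1 *: l) *m B).
      by rewrite -scalemxAl scaleNr opprK [RHS]scalerDr scalerA mulfV // scale1r.
    rewrite NZ ler_wpM2l ?abs_ge0 //; apply: minb; exact: suppZ.
  split => //.
  have := NB (a *: b' + l *m B) (a *: b'); rewrite addrC addKr NZ => h.
  apply: le_trans h _; rewrite ge_max lexx /=; exact: low1.
have claim' : forall l a, supp j l ->
   [/\ abs a <= N (a *: bj + l *m B), N (l *m B) <= N (a *: bj + l *m B)
     & N (a *: bj + l *m B) <= Num.max (abs a) (N (l *m B))].
  move=> l a hl; have [c1 c2 c3] := claim l (a * c) hl.
  have ac : abs (a * c) * N b' = abs a.
    by rewrite absM // hc -mulrA mulVf ?mulr1 // gt_eqF.
  by rewrite /bj scalerA; rewrite ac in c1 c3.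
have bjj : bj 0 jo != 0 by rewrite mxE b'j mulr1.
have bjk : forall k : 'I_r, (j < k)%N -> bj 0 k = 0 by move=> k hk; rewrite mxE b'k ?mulr0.
clearbody bj.
pose B' : 'M[K]_r := \matrix_(i, k) (if i == jo then bj 0 k else B i k).
exists B'; split.
- move=> l hl.
  pose l0 : 'rV[K]_r := \row_i (if i == jo then 0 else l 0 i).
  have hl0 : supp j l0.
    move=> i hi; rewrite mxE; case: eqP => // /eqP ne; apply: hl.
    by rewrite ltn_neqAle hi andbT; apply: contra ne => /eqP h; apply/eqP/val_inj.
  have dec : l *m B' = l 0 jo *: bj + l0 *m B.
    apply/rowP => k; rewrite !mxE (bigD1 jo) //= [X in _ = _ + X](bigD1 jo) //= !mxE !eqxx mul0r add0r.
    congr (_ + _); apply: eq_bigr => i hi; rewrite !mxE (negPf hi) //.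
  have [c1 c2 c3] := claim' l0 (l 0 jo) hl0.
  rewrite dec; split.
  + move=> i; have [-> //|ne] := eqVneq i jo.
    apply: le_trans c2; have [h _] := hO l0 hl0; have := h i; by rewrite mxE (negPf ne).
  + move=> t t0 ht; apply: le_trans c3 _; rewrite ge_max ht /=.
    apply: (proj2 (hO l0 hl0)) => // i; rewrite mxE; case: ifP => _; last exact: ht.
    by rewrite abs0.
- move=> i k hi hik; rewrite mxE; case: eqP => [ei|/eqP ne].
    rewrite bjk //; by rewrite ei in hik.
  apply: hT => //; rewrite ltn_neqAle -ltnS hi andbT.
  by apply: contra ne => /eqP h; apply/eqP/val_inj.
- move=> i hi; rewrite mxE; case: (i =P jo) => [->|/eqP ne]; first exact: bjj.
  apply: hD; rewrite ltn_neqAle -ltnS hi andbT.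
  by apply: contra ne => /eqP h; apply/eqP/val_inj.
Qed.

Lemma GS_all j : (j <= r)%N -> exists B, [/\ orth j B, tri j B & dia j B].
Proof.
elim: j => [_|j IH hj].
  exists 0; split => // l hl.
  have l0 : forall i, l 0 i = 0 by move=> i; apply: hl.
  split; first by move=> i; rewrite l0 abs0 // N_ge0.
  by move=> t t0 _; rewrite mulmx0 N0.
have [B [h1 h2 h3]] := IH (ltnW hj).
exact: (GS_step hj h1 h2 h3).
Qed.

Lemma GS_final : exists B : 'M[K]_r, B \in unitmx /\ forall v : 'rV[K]_r,
  (forall i, abs (v 0 i) <= N (v *m B)) /\
  (forall t, 0 <= t -> (forall i, abs (v 0 i) <= t) -> N (v *m B) <= t).
Proof.
have [B [hO hT hD]] := GS_all (leqnn r).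
exists B; split.
  rewrite unitmxE det_trig; last by apply/is_trig_mxP => i k hik; exact: hT (ltn_ord i) hik.
  by rewrite unitfE; apply/prodf_neq0 => i _; apply: hD.
move=> v; apply: hO => i; by rewrite leqNgt ltn_ord.
Qed.

End GS.

Section Lat.
Local Open Scope classical_set_scope.
Local Open Scope ring_scope.
Variables (R : realType) (K : fieldType) (abs : K -> R).
Hypothesis hK : nonarch_field abs.
Hypothesis hsph : spherically_complete abs.
Hypothesis hval : value_group_full abs.
Variable r : nat.
Variable L : 'rV[K]_r -> Prop.
Variable a : K.
Hypothesis anz : a != 0.
Hypothesis LD : forall u v : 'rV[K]_r, L u -> L v -> L (u + v).
Hypothesis LZ : forall (c : K) (u : 'rV[K]_r), abs c <= 1 -> L u -> L (c *: u).
Hypothesis Lsub : forall u : 'rV[K]_r, (forall i, abs (u 0 i) <= 1) -> L u.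
Hypothesis Lbd : forall u : 'rV[K]_r, L u -> forall i, abs (a * u 0 i) <= 1.

Let S (u : 'rV[K]_r) : set R := fun x => exists c, [/\ c != 0, L (c^-1 *: u) & x = abs c].
Let N (u : 'rV[K]_r) := inf (S u).

Let S0 u : S u !=set0.
Proof.
pose t := 1 + \sum_i abs (u 0 i).
have st : 0 <= \sum_i abs (u 0 i) by apply: sumr_ge0 => i _; exact: abs_ge0.
have t0 : 0 < t by rewrite /t; lra.
have [c [cnz hc]] := ex_abs hval t0.
exists t, c; split => //; apply: Lsub => i; rewrite mxE absM // absV // hc.
rewrite ler_pdivrMl // mulr1 /t (bigD1 i) //=.
have : 0 <= \sum_(j | j != i) abs (u 0 j) by apply: sumr_ge0 => j _; exact: abs_ge0.
lra.
Qed.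

Let Slb u : has_lbound (S u).
Proof. by exists 0 => x [c [_ _ ->]]; exact: abs_ge0. Qed.

Let N_le u c : c != 0 -> L (c^-1 *: u) -> N u <= abs c.
Proof. by move=> cnz hc; apply: ge_inf => //; exists c. Qed.

Let N_lt u t : N u < t -> exists c, [/\ c != 0, L (c^-1 *: u) & abs c < t].
Proof. by move=> /(inf_lt (S0 u)) [x [c [h1 h2 ->]] h]; exists c. Qed.

Lemma Lat_N_ge0 u : 0 <= N u.
Proof. by apply: lb_le_inf => // x [c [_ _ ->]]; exact: abs_ge0. Qed.

Let NZle c u : c != 0 -> N (c *: u) <= abs c * N u.
Proof.
move=> cnz; rewrite leNgt; apply/negP => h.
have ac := abs_gt0 hK cnz.
have : N u < N (c *: u) / abs c by rewrite ltr_pdivlMr // mulrC.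
move=> /N_lt [d [dnz hd hdlt]].
have : N (c *: u) <= abs (c * d).
  apply: N_le; first by rewrite mulf_neq0.
  by rewrite scalerA invfM mulrAC mulVf // mul1r.
rewrite absM //; move: hdlt; rewrite ltr_pdivlMr //; nra.
Qed.

Lemma Lat_N0 : N 0 = 0.
Proof.
apply/eqP; rewrite eq_le Lat_N_ge0 andbT; rewrite leNgt; apply/negP => h.
have : 0 < N 0 / 2 by lra.
move=> /(ex_abs hval) [c [cnz hc]].
have hL : L (c^-1 *: 0) by rewrite scaler0; apply: Lsub => i; rewrite mxE abs0 // ler01.
have := N_le cnz hL; rewrite hc; lra.
Qed.

Lemma Lat_NZ c u : N (c *: u) = abs c * N u.
Proof.
have [->|cnz] := eqVneq c 0; first by rewrite scale0r Lat_N0 abs0 // mul0r.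
apply/eqP; rewrite eq_le NZle //=.
have ac := abs_gt0 hK cnz.
have := @NZle c^-1 (c *: u) (invr_neq0 cnz); rewrite scalerA mulVf // scale1r absV // => h.
by have := ler_wpM2l (ltW ac) h; rewrite mulrA mulfV ?gt_eqF // mul1r.
Qed.

Lemma Lat_ND u v : N (u + v) <= Num.max (N u) (N v).
Proof.
rewrite leNgt; apply/negP => h; move: h; rewrite gt_max => /andP [h1 h2].
have [d1 [n1 l1 a1]] := N_lt h1.
have [d2 [n2 l2 a2]] := N_lt h2.
have key : forall d1 d2 u v, d1 != 0 -> d2 != 0 -> abs d2 <= abs d1 ->
   L (d1^-1 *: u) -> L (d2^-1 *: v) -> L (d1^-1 *: (u + v)).
  move=> e1 e2 u' v' n1' n2' le l1' l2'.
  rewrite scalerDr; apply: LD => //.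
  have -> : e1^-1 *: v' = (e2 / e1) *: (e2^-1 *: v') by rewrite scalerA mulrAC mulfV ?mul1r.
  apply: LZ => //; rewrite absM // absV // ler_pdivrMr ?mul1r //; exact: abs_gt0.
have [le|le] := leP (abs d2) (abs d1).
  have := N_le n1 (key _ _ _ _ n1 n2 le l1 l2); lra.
have := N_le n2 (key _ _ _ _ n2 n1 (ltW le) l2 l1); rewrite addrC; lra.
Qed.

Lemma Lat_N_pos u : u != 0 -> 0 < N u.
Proof.
move=> unz.
have [i ui] : exists i, u 0 i != 0.
  apply/existsP; apply: contraT; rewrite negb_exists => /forallP h.
  apply: contraNT unz => _; apply/eqP/rowP => i; rewrite mxE; apply/eqP.
  by have := h i; rewrite negbK.
have pos : 0 < abs a * abs (u 0 i) by apply: mulr_gt0; apply: abs_gt0.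
apply: lt_le_trans pos _; apply: lb_le_inf => // x [c [cnz hc ->]].
have := Lbd hc i; rewrite mxE absM // absM // absV // mulrCA.
by rewrite ler_pdivrMl ?mulr1 //; exact: abs_gt0.
Qed.

Lemma Lat_NL u : L u -> N u <= 1.
Proof. by move=> h; rewrite -(abs1 hK); apply: N_le; rewrite ?oner_neq0 ?invr1 ?scale1r. Qed.

Lemma Lat_LN u : N u < 1 -> L u.
Proof.
move=> /N_lt [c [cnz hc ac]].
have -> : u = c *: (c^-1 *: u) by rewrite scalerA mulfV ?scale1r.
by apply: LZ => //; exact: ltW.
Qed.

Lemma lattice_basis : exists B : 'M[K]_r, B \in unitmx /\
  (forall (v : 'rV[K]_r) (e : K), (forall i, abs (v 0 i) <= 1) -> abs e < 1 -> L (e *: (v *m B))) /\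
  (forall u : 'rV[K]_r, L u -> exists v : 'rV[K]_r, (forall i, abs (v 0 i) <= 1) /\ u = v *m B).
Proof.
have [B [uB hB]] := GS_final hK hsph hval Lat_N_ge0 Lat_NZ Lat_ND Lat_N_pos.
exists B; split => //; split.
  move=> v e hv he; apply: Lat_LN; rewrite Lat_NZ.
  have := proj2 (hB v) 1 ler01 hv; have := abs_ge0 hK e; have := Lat_N_ge0 (v *m B); nra.
move=> u hu; exists (u *m invmx B); split; last by rewrite mulmxKV.
move=> i; apply: le_trans (proj1 (hB _) i) _; rewrite mulmxKV //; exact: Lat_NL.
Qed.

End Lat.

Section IntRing.
Variables (R : realType) (K : fieldType) (abs : K -> R).
Hypothesis hK : nonarch_field abs.
Hypothesis hval : value_group_full abs.

Definition imul (a b : intring abs) : intring abs.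
Proof.
exists (val a * val b); rewrite absM //.
exact: mulr_ile1 (abs_ge0 hK _) (abs_ge0 hK _) (valP a) (valP b).
Defined.
Lemma imulE a b : val (imul a b) = val a * val b. Proof. by []. Qed.

Definition ione : intring abs.
Proof. by exists 1; rewrite abs1. Defined.
Definition izero : intring abs.
Proof. by exists 0; rewrite abs0 // ler01. Defined.
Definition iof (x : K) (h : abs x <= 1) : intring abs := exist _ x h.

Variable X : omod abs.
Implicit Types (x y : X) (a b c : intring abs).

Lemma mact_x0 a : mact a (0 : X) = 0.
Proof. have h := mactDr a (0 : X) 0; rewrite addr0 in h. by apply: (addrI (mact a 0)); rewrite addr0 -h. Qed.
Lemma mact_0x a x : val a = 0 -> mact a x = 0.
Proof.
move=> h; have e := mactDl x (a := a) (b := a) (c := a); rewrite h addr0 in e.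
by apply: (addrI (mact a x)); rewrite addr0 -e.
Qed.
Lemma mactN a x : mact a (- x) = - mact a x.
Proof. by apply/eqP; rewrite -addr_eq0 -mactDr addNr mact_x0. Qed.
Lemma mactB a x y : mact a (x - y) = mact a x - mact a y.
Proof. by rewrite mactDr mactN. Qed.
Lemma mactAC a b a' b' x : val a * val b = val a' * val b' ->
  mact a (mact b x) = mact a' (mact b' x).
Proof. by move=> h; rewrite -(mactA (c := imul a b)) // (mactA (a := a') (b := b')). Qed.
Lemma mactC a b x : mact a (mact b x) = mact b (mact a x).
Proof. by apply: mactAC; rewrite mulrC. Qed.
Lemma mactA3 a b c d x : val d = val a * val b * val c ->
  mact a (mact b (mact c x)) = mact d x.
Proof. by move=> h; rewrite -(mactA (a := b) (b := c) (c := imul b c)) // (mactA (c := d) (a := a) (b := imul b c)) // h /= mulrA. Qed.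
End IntRing.

Section Split.
Variables (R : realType) (K : fieldType) (abs : K -> R).
Hypothesis hK : nonarch_field abs.
Hypothesis hval : value_group_full abs.

Lemma split_m (d : K) : abs d < 1 -> exists e1 e2 : intring abs,
  [/\ in_mideal e1, in_mideal e2, val e1 != 0 & val e1 * val e2 = d].
Proof.
move=> hd; have d0 := abs_ge0 hK d.
have t0 : 0 < (1 + abs d) / 2 by lra.
have [x [xnz hx]] := ex_abs hval t0.
have hx1 : abs x < 1 by rewrite hx; lra.
have ax := abs_gt0 hK xnz.
have hy : abs (d / x) < 1.
  by rewrite absM // absV // ltr_pdivrMr // mul1r hx; lra.
exists (iof (ltW hx1)), (iof (ltW hy)); split => //=.
by rewrite mulrC -mulrA mulVf // mulr1.
Qed.

Lemma ex_m_nz : exists e : intring abs, in_mideal e /\ val e != 0.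
Proof.
have t0 : (0 : R) < 1 / 2 by lra.
have [x [xnz hx]] := ex_abs hval t0.
have hx1 : abs x < 1 by rewrite hx; lra.
by exists (iof (ltW hx1)); split.
Qed.

Lemma le1_of_m (X : R) : (forall e : intring abs, in_mideal e -> abs (val e) * X <= 1) -> X <= 1.
Proof.
move=> h; rewrite leNgt; apply/negP => hX.
have iX : 0 < X^-1 by rewrite invr_gt0; lra.
have t0 : 0 < (1 + X^-1) / 2 by lra.
have [x [xnz hx]] := ex_abs hval t0.
have hX1 : X^-1 < 1 by rewrite invf_lt1; lra.
have hx1 : abs x < 1 by rewrite hx; lra.
have := h (iof (ltW hx1)) hx1; rewrite /= hx.
have e : X^-1 * X = 1 by rewrite mulVf // gt_eqF //; lra.
nra.
Qed.
End Split.

Section Tors.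
Variables (R : realType) (K : fieldType) (abs : K -> R).
Hypothesis hK : nonarch_field abs.
Hypothesis hval : value_group_full abs.

Lemma s_0 (X : omod abs) (r : nat) (s : 'I_r -> X -> intring abs) :
  olinear_free s -> forall i, val (s i 0) = 0.
Proof.
move=> hs i; have := (proj1 (hs i)) 0 0; rewrite addr0 => h.
by apply: (addrI (val (s i 0))); rewrite addr0 -h.
Qed.

Lemma f_0 (X M : omod abs) (f : X -> M) : olinear f -> f 0 = 0.
Proof.
move=> hf; have := (proj1 hf) 0 0; rewrite addr0 => h.
by apply: (addrI (f 0)); rewrite addr0 -h.
Qed.

Lemma in_mideal_mul (e a : intring abs) : in_mideal e -> in_mideal (imul hK e a).
Proof.
rewrite /in_mideal /= absM // => he.
have := valP a; have := abs_ge0 hK (val a); have := abs_ge0 hK (val e); nra.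
Qed.

Variables (M : omod abs) (r : nat).
Hypothesis hM : almost_finite_free M r.

Lemma torsion (y : M) (c : intring abs) : val c != 0 -> mact c y = 0 ->
  forall e, in_mideal e -> mact e y = 0.
Proof.
move=> cnz hc e he.
have hea := abs_ge0 hK (val e).
have t0 : 0 < (1 + abs (val e)) / 2 by lra.
have [g [gnz hg]] := ex_abs hval t0.
have hg1 : abs g < 1 by rewrite hg; rewrite /in_mideal in he; lra.
pose gi := iof (ltW hg1).
have hgs : forall g', g' \in [:: gi] -> in_mideal g'.
  by move=> g'; rewrite inE => /eqP ->.
have [X [s [f [[hsl hsk hss] hfl hker hcok]]]] := hM hgs.
have ag := abs_gt0 hK gnz.
have hd : abs (val e / g) < 1.
  by rewrite absM // absV // hg ltr_pdivrMr // mul1r; rewrite /in_mideal in he; lra.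
have [e1 [e2 [he1 he2 e1nz he12]]] := split_m hK hval hd.
have [x hx] := hcok gi e2 y (mem_head _ _) he2.
have fcx : f (mact c x) = 0.
  rewrite (proj2 hfl) hx (mactC hK c) (mactC hK c gi) hc.
  by rewrite !mact_x0.
have [e0 [he0 e0nz]] := ex_m_nz hval.
have k := hker gi e0 (mact c x) (mem_head _ _) he0 fcx.
have sx : forall i, val (s i x) = 0.
  move=> i; have := congr1 (fun z => val (s i z)) k; rewrite /= !(proj2 (hsl i)) (s_0 hsl).
  move=> /eqP; rewrite !mulf_eq0 (negPf e0nz) (negPf cnz) /= => /orP [] /eqP //.
  by move=> h; move: gnz; rewrite h eqxx.
have kx := hsk e1 x he1 sx.
have := congr1 f kx; rewrite (proj2 hfl) hx f_0 // => h.
rewrite -h; apply: esym; apply: (mactA3 hK) => //.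
by rewrite he12 /= mulfVK.
Qed.
End Tors.

Unset Implicit Arguments.

Section ELayer.
Variables (R : realType) (K : fieldType) (abs : K -> R).
Hypothesis hK : nonarch_field abs.
Hypothesis hval : value_group_full abs.
Variables (M : omod abs) (r : nat).
Hypothesis htors : forall (y : M) (c : intring abs), val c != 0 -> mact c y = 0 ->
  forall e, in_mideal e -> mact e y = 0.
Variables (X0 : omod abs) (s0 : 'I_r -> X0 -> intring abs) (f0 : X0 -> M) (g0 : intring abs).
Hypothesis hs0 : almost_iso_free s0.
Hypothesis hf0 : olinear f0.
Hypothesis hker0 : forall e x, in_mideal e -> f0 x = 0 -> mact e (mact g0 x) = 0.
Hypothesis hcok0 : forall e y, in_mideal e -> exists x, f0 x = mact e (mact g0 y).
Hypothesis g0nz : val g0 != 0.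

Let hsl := let: And3 h _ _ := hs0 in h.
Let hsk := let: And3 _ h _ := hs0 in h.
Let hss := let: And3 _ _ h := hs0 in h.

Definition Rel0 (u : 'rV[K]_r) (y : M) :=
  exists x : X0, (forall i, val (s0 i x) = u 0 i) /\ f0 x = y.
Definition Erel (u : 'rV[K]_r) (y : M) := exists c : intring abs, val c != 0 /\
  forall e : intring abs, in_mideal e -> Rel0 ((val e * val c) *: u) (mact e (mact c y)).
Definition Lam (u : 'rV[K]_r) := forall e : intring abs, in_mideal e ->
  exists y, Erel (val e *: u) y.

Let sD i x y : val (s0 i (x + y)) = val (s0 i x) + val (s0 i y) := proj1 (hsl i) x y.
Let sZ i a x : val (s0 i (mact a x)) = val a * val (s0 i x) := proj2 (hsl i) a x.
Let fD x y : f0 (x + y) = f0 x + f0 y := proj1 hf0 x y.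
Let fZ a x : f0 (mact a x) = mact a (f0 x) := proj2 hf0 a x.

Lemma E_add (u : 'rV[K]_r) (y : M) (u' : 'rV[K]_r) (y' : M) : Erel u y -> Erel u' y' -> Erel (u + u') (y + y').
Proof.
move=> [c [cnz hc]] [c' [cnz' hc']].
exists (imul hK c c'); split; first by rewrite /= mulf_neq0.
move=> e he.
have [x1 [hs1 hf1]] := hc _ (in_mideal_mul hK c' he).
have [x2 [hs2 hf2]] := hc' _ (in_mideal_mul hK c he).
exists (x1 + x2); split.
  by move=> i; rewrite sD hs1 hs2 !mxE /=; ring.
rewrite fD hf1 hf2 !mactDr; congr (_ + _); apply: (mactAC hK) => /=; ring.
Qed.

Lemma E_scale (u : 'rV[K]_r) (y : M) (l : intring abs) : Erel u y -> Erel (val l *: u) (mact l y).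
Proof.
move=> [c [cnz hc]]; exists c; split => // e he.
have [x [hs hf]] := hc e he.
exists (mact l x); split.
  by move=> i; rewrite sZ hs !mxE; ring.
by rewrite fZ hf (mactC hK l) (mactC hK l c).
Qed.

Lemma E_0 : Erel 0 0.
Proof.
exists (ione hK); split; first by rewrite /= oner_neq0.
move=> e he; exists 0; split; last by rewrite f_0 // !mact_x0.
by move=> i; rewrite (s_0 hsl) !mxE mulr0.
Qed.

Definition imone : intring abs.
Proof. by exists (-1); rewrite absN // abs1. Defined.

Lemma mact_mone (X : omod abs) (x : X) : mact imone x = - x.
Proof.
apply/eqP; rewrite -addr_eq0; apply/eqP.
rewrite -{2}(mact1 (a := ione hK) x) // -(mactDl (c := izero hK)) /=; last by rewrite addNr.
by rewrite mact_0x.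
Qed.

Lemma E_neg (u : 'rV[K]_r) (y : M) : Erel u y -> Erel (- u) (- y).
Proof. by move=> /(E_scale _ _ imone); rewrite mact_mone /= scaleN1r. Qed.

Lemma E_Lam (u : 'rV[K]_r) (y : M) : Erel u y -> Lam u.
Proof. by move=> h e he; exists (mact e y); apply: E_scale. Qed.

Lemma Lam_add (u u' : 'rV[K]_r) : Lam u -> Lam u' -> Lam (u + u').
Proof.
move=> h h' e he; have [y hy] := h e he; have [y' hy'] := h' e he.
by exists (y + y'); rewrite scalerDr; apply: E_add.
Qed.

Lemma Lam_scale (c : K) (u : 'rV[K]_r) : abs c <= 1 -> Lam u -> Lam (c *: u).
Proof.
move=> hc h e he; have [y hy] := h e he.
exists (mact (iof hc) y); have := E_scale _ _ (iof hc) hy.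
by rewrite /= !scalerA mulrC.
Qed.

Lemma Lam_sub (u : 'rV[K]_r) : (forall i, abs (u 0 i) <= 1) -> Lam u.
Proof.
move=> hu e he.
have [e1 [e2 [he1 he2 _ he12]]] := split_m hK hval he.
have [x hx] := hss e1 (fun i => iof (hu i)) he1.
exists (mact e2 (f0 x)), (ione hK); split; first by rewrite /= oner_neq0.
move=> ep hep; exists (mact ep (mact e2 x)); split.
  by move=> i; rewrite !sZ hx !mxE /= -he12 /val /=; ring.
by rewrite !fZ (mact1 (a := ione hK)).
Qed.

Lemma mact4E (X : omod abs) (a b c d : intring abs) (x : X) :
  mact a (mact b (mact c (mact d x))) = mact (imul hK (imul hK a b) (imul hK c d)) x.
Proof.
rewrite -(mactA (a := c) (b := d) (c := imul hK c d)) //.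
by apply: (mactA3 hK) => /=; rewrite /val /=; ring.
Qed.

Lemma mact4 (X : omod abs) (a b c d a' b' c' d' : intring abs) (x : X) :
  val a * val b * val c * val d = val a' * val b' * val c' * val d' ->
  mact a (mact b (mact c (mact d x))) = mact a' (mact b' (mact c' (mact d' x))).
Proof.
move=> h; rewrite !mact4E; congr (mact _ x); apply: val_inj.
by rewrite /= !mulrA.
Qed.

Let sN i x : val (s0 i (- x)) = - val (s0 i x).
Proof.
have := sD i x (- x); rewrite subrr (s_0 hsl) => h.
by apply/eqP; rewrite -addr_eq0 addrC -h.
Qed.
Let sB i x y : val (s0 i (x - y)) = val (s0 i x) - val (s0 i y).
Proof. by rewrite sD sN. Qed.
Let fB x y : f0 (x - y) = f0 x - f0 y.
Proof.
have := fD x (- x); rewrite subrr f_0 // => h.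
have hN : f0 (- y) = - f0 y.
  have := fD y (- y); rewrite subrr f_0 // => h'.
  by apply/eqP; rewrite -addr_eq0 addrC -h'.
by rewrite fD hN.
Qed.

Lemma Lam_bd (u : 'rV[K]_r) : Lam u -> forall i, abs (val g0 * u 0 i) <= 1.
Proof.
move=> hu i.
have [e3 [he3 e3nz]] := ex_m_nz hval.
have key : forall e e'' : intring abs, in_mideal e -> in_mideal e'' ->
    abs (val e'') * (abs (val e) * abs (val g0 * u 0 i)) <= 1.
  move=> e e'' he he''.
  have [y [c [cnz hc]]] := hu e he.
  have [x' hx'] := hcok0 e'' y he''.
  have [x [hxs hxf]] := hc e3 he3.
  pose z := mact e'' (mact g0 x) - mact e3 (mact c x').
  have fz : f0 z = 0.
    rewrite /z fB !fZ hxf hx'; apply/eqP; rewrite subr_eq0; apply/eqP.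
    by apply: mact4; rewrite /val /=; ring.
  have kz := hker0 e3 z he3 fz.
  have := congr1 (fun w => val (s0 i w)) kz; rewrite /= !sZ (s_0 hsl) /z sB !sZ hxs !mxE => h.
  have h2 : (val e3 * val g0 * (val e3 * val c)) *
      (val e'' * val g0 * val e * u 0 i - val (s0 i x')) = 0.
    by rewrite -[RHS]h /val /=; ring.
  move: h2 => /eqP; rewrite mulf_eq0 !mulf_eq0 (negPf e3nz) (negPf g0nz) (negPf cnz) /=.
  rewrite subr_eq0 => /eqP h3.
  have h5 : abs (sval (s0 i x')) <= 1 := valP (s0 i x').
  rewrite -h3 !(absM hK) in h5.
  rewrite (absM hK).
  have -> : abs (sval e'') * (abs (sval e) * (abs (sval g0) * abs (u 0 i))) =
            abs (sval e'') * abs (sval g0) * abs (sval e) * abs (u 0 i) by ring.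
  exact: h5.
apply: (le1_of_m hval) => e he.
rewrite absM //.
apply: (le1_of_m hval) => e'' he''.
by have := key e e'' he he''; rewrite absM.
Qed.

Lemma E_inj (u : 'rV[K]_r) (y : M) : Erel u y ->
  (forall e, in_mideal e -> mact e y = 0) -> u = 0.
Proof.
move=> [c [cnz hc]] hy.
have [e3 [he3 e3nz]] := ex_m_nz hval.
have [x [hxs hxf]] := hc e3 he3.
have fx : f0 x = 0 by rewrite hxf (mactC hK e3 c) hy // mact_x0.
have kx := hker0 e3 x he3 fx.
apply/rowP => i; rewrite mxE.
have := congr1 (fun w => val (s0 i w)) kx; rewrite /= !sZ (s_0 hsl) hxs !mxE => /eqP.
by rewrite !mulf_eq0 (negPf e3nz) (negPf g0nz) (negPf cnz) /= => /eqP.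
Qed.

Lemma E_tors (y : M) : Erel 0 y -> forall e, in_mideal e -> mact e y = 0.
Proof.
move=> [c [cnz hc]].
have [e3 [he3 e3nz]] := ex_m_nz hval.
have [x [hxs hxf]] := hc e3 he3.
have kx : mact e3 x = 0.
  by apply: hsk => // i; rewrite hxs !mxE mulr0.
have := congr1 f0 kx; rewrite fZ hxf f_0 // => h.
apply: (htors y (imul hK e3 (imul hK e3 c))).
  by rewrite /= !mulf_neq0.
by rewrite -h; apply: esym; apply: (mactA3 hK) => /=; rewrite /val /=; ring.
Qed.

Lemma E_surj (y : M) : exists u, Erel u y.
Proof.
have [e0 [he0 e0nz]] := ex_m_nz hval.
have [x hx] := hcok0 e0 y he0.
pose c := imul hK e0 g0.
have cnz : val c != 0 by rewrite /= mulf_neq0.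
exists ((val c)^-1 *: \row_i val (s0 i x)), c; split => // e he.
exists (mact e x); split.
  by move=> i; rewrite sZ !mxE mulrA -(mulrA (val e)) mulfV // mulr1.
by rewrite fZ hx (mactA (a := e0) (b := g0) (c := c)).
Qed.


Variable B : 'M[K]_r.
Hypothesis uB : B \in unitmx.
Hypothesis hB1 : forall (v : 'rV[K]_r) (e : K), (forall i, abs (v 0 i) <= 1) ->
  abs e < 1 -> Lam (e *: (v *m B)).
Hypothesis hB2 : forall u : 'rV[K]_r, Lam u ->
  exists v : 'rV[K]_r, (forall i, abs (v 0 i) <= 1) /\ u = v *m B.

Definition Pp (p : 'rV[K]_r * M) : Prop :=
  (forall i, abs (p.1 0 i) <= 1) /\ Erel (p.1 *m B) p.2.
Definition Pb : {pred 'rV[K]_r * M} := fun p => `[< Pp p >].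

Lemma PbP p : reflect (Pp p) (p \in Pb).
Proof. exact: asboolP. Qed.

Fact Pb_closed : zmod_closed Pb.
Proof.
split.
  apply/PbP; split; first by move=> i; rewrite mxE abs0 // ler01.
  by rewrite mul0mx; exact: E_0.
move=> [u y] [u' y'] /PbP [h1 h2] /PbP [h1' h2']; apply/PbP; split => /=.
  move=> i; rewrite !mxE; apply: (absD_le hK); [exact: h1 | rewrite absN //; exact: h1'].
rewrite mulmxBl; apply: E_add => //; exact: E_neg.
Qed.
HB.instance Definition _ := GRing.isZmodClosed.Build _ Pb Pb_closed.

Inductive Xt : predArgType := XSub p & p \in Pb.
Definition xval w := let: XSub u _ := w in u.
HB.instance Definition _ := [isSub of Xt for xval].
HB.instance Definition _ := [Choice of Xt by <:].
HB.instance Definition _ := [SubChoice_isSubZmodule of Xt by <:].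

Lemma xvalP (w : Xt) : Pp (xval w).
Proof. by case: w => p hp; apply/PbP. Qed.
Lemma xvalD (w w' : Xt) : xval (w + w') = xval w + xval w'. Proof. by []. Qed.
Lemma xval0 : xval (0 : Xt) = 0. Proof. by []. Qed.

Definition pact (a : intring abs) (p : 'rV[K]_r * M) : 'rV[K]_r * M :=
  (val a *: p.1, mact a p.2).
Lemma pact_in a p : p \in Pb -> pact a p \in Pb.
Proof.
move=> /PbP [h1 h2]; apply/PbP; split => /=.
  move=> i; rewrite mxE absM //; exact: mulr_ile1 (abs_ge0 hK _) (abs_ge0 hK _) (valP a) (h1 i).
by rewrite -scalemxAl; apply: E_scale.
Qed.
Definition xact (a : intring abs) (w : Xt) : Xt :=
  let: XSub p hp := w in XSub (pact a p) (pact_in a p hp).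
Lemma xactE a w : xval (xact a w) = pact a (xval w).
Proof. by case: w. Qed.

Lemma xact_Dr a (x y : Xt) : xact a (x + y) = xact a x + xact a y.
Proof.
apply: val_inj; change (xval (xact a (x + y)) = xval (xact a x + xact a y)).
rewrite xvalD !xactE xvalD /pact; case: (xval x) (xval y) => [u1 y1] [u2 y2] /=.
by rewrite scalerDr mactDr.
Qed.
Lemma xact_Dl a b c (x : Xt) : val c = val a + val b -> xact c x = xact a x + xact b x.
Proof.
move=> h; apply: val_inj; change (xval (xact c x) = xval (xact a x + xact b x)).
rewrite xvalD !xactE /pact; case: (xval x) => [u1 y1] /=.
by rewrite h scalerDl (mactDl y1 h).
Qed.
Lemma xact_A a b c (x : Xt) : val c = val a * val b -> xact c x = xact a (xact b x).
Proof.
move=> h; apply: val_inj; change (xval (xact c x) = xval (xact a (xact b x))).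
rewrite !xactE /pact; case: (xval x) => [u1 y1] /=.
by rewrite h scalerA (mactA y1 h).
Qed.
Lemma xact_1 a (x : Xt) : val a = 1 -> xact a x = x.
Proof.
move=> h; apply: val_inj; change (xval (xact a x) = xval x).
rewrite !xactE /pact; case: (xval x) => [u1 y1] /=.
by rewrite h scale1r (mact1 y1 h).
Qed.

Definition Xo : omod abs := OMod xact_Dr xact_Dl xact_A xact_1.

Definition sX (i : 'I_r) (w : Xo) : intring abs := iof ((proj1 (xvalP w)) i).
Definition fX (w : Xo) : M := (xval w).2.

Lemma final_iso : almost_iso_free sX /\ almost_iso fX.
Proof.
split; first split.
- move=> i; split.
    by move=> x y; rewrite /sX /= !mxE.
  by move=> a x; rewrite /sX /= xactE /pact /= mxE.
- move=> e x he h0.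
  have u0 : (xval x).1 = 0 by apply/rowP => i; rewrite mxE; exact: h0.
  have [_ hE] := xvalP x; rewrite u0 mul0mx in hE.
  apply: val_inj; change (xval (xact e x) = xval 0).
  rewrite xactE xval0 /pact u0 scaler0 (E_tors _ hE e he).
  by [].
- move=> e v he.
  have [e1 [e2 [he1 he2 _ he12]]] := split_m hK hval he.
  pose v' : 'rV[K]_r := \row_i val (v i).
  have hv' : forall i, abs (v' 0 i) <= 1 by move=> i; rewrite mxE; exact: (valP (v i)).
  have [y hy] := hB1 v' (val e1) hv' he1 e2 he2.
  pose p := (val e *: v', y).
  have hp : p \in Pb.
    apply/PbP; split => /=.
      move=> i; rewrite mxE absM //; exact: mulr_ile1 (abs_ge0 hK _) (abs_ge0 hK _) (ltW he) (hv' i).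
    by rewrite -scalemxAl -he12 mulrC -scalerA.
  by exists (XSub p hp) => i; rewrite /sX /= !mxE.
split; first split.
- by move=> x y; rewrite /fX xvalD.
- by move=> a x; rewrite /fX xactE.
- move=> e x he h0.
  have [h1 hE] := xvalP x.
  move: h0; rewrite /fX => h0; rewrite h0 in hE.
  have := E_inj _ _ hE (fun e' _ => mact_x0 _ e').
  move=> /(congr1 (mulmx^~ (invmx B))); rewrite mulmxK // mul0mx => u0.
  apply: val_inj; change (xval (xact e x) = xval 0).
  by rewrite xactE xval0 /pact u0 h0 scaler0 mact_x0.
- move=> e y he.
  have [u hu] := E_surj y.
  have [v [hv uv]] := hB2 u (E_Lam _ _ hu).
  pose p := (val e *: v, mact e y).
  have hp : p \in Pb.
    apply/PbP; split => /=.
      move=> i; rewrite mxE absM //; exact: mulr_ile1 (abs_ge0 hK _) (abs_ge0 hK _) (ltW he) (hv i).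
    by rewrite -scalemxAl -uv; apply: E_scale.
  by exists (XSub p hp).
Qed.

End ELayer.

Theorem theorem5p3 (R : realType) (K : fieldType) (abs : K -> R)
  (hK : nonarch_field abs) (hsph : spherically_complete abs)
  (hval : value_group_full abs)
  (M : omod abs) (r : nat) (hM : almost_finite_free M r) :
  exists n : nat, almost_iso_to_free M n.
Proof.
exists r.
have htors := torsion hK hval hM.
have t0 : (0 : R) < 1 / 2 by lra.
have [g [gnz hg]] := ex_abs hval t0.
have hg1 : abs g < 1 by rewrite hg; lra.
pose g0 := iof (ltW hg1).
have hgs : forall g', g' \in [:: g0] -> in_mideal g'.
  by move=> g'; rewrite inE => /eqP ->.
have [X0 [s0 [f0 [hs0 hf0 hker hcok]]]] := hM [:: g0] hgs.
have hker0 : forall (e : intring abs) (x : X0), in_mideal e -> f0 x = 0 -> mact e (mact g0 x) = 0.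
  by move=> e x he hx; apply: hker => //; exact: mem_head.
have hcok0 : forall (e : intring abs) (y : M), in_mideal e -> exists x, f0 x = mact e (mact g0 y).
  by move=> e y he; apply: hcok => //; exact: mem_head.
have g0nz : val g0 != 0 by [].
have LD := Lam_add R K abs hK M r X0 s0 f0 hs0 hf0.
have LZ := Lam_scale R K abs hK M r X0 s0 f0 hs0 hf0.
have Lsub := Lam_sub R K abs hK hval M r X0 s0 f0 hs0 hf0.
have Lbd := Lam_bd R K abs hK hval M r X0 s0 f0 g0 hs0 hf0 hker0 hcok0 g0nz.
have [B [uB [hB1 hB2]]] := lattice_basis hK hsph hval g0nz LD LZ Lsub Lbd.
have [h1 h2] := final_iso R K abs hK hval M r htors X0 s0 f0 g0 hs0 hf0 hker0 hcok0 g0nz B uB hB1 hB2.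
by exists (Xo R K abs hK M r X0 s0 f0 hs0 hf0 B), (sX R K abs hK M r X0 s0 f0 hs0 hf0 B),
  (fX R K abs hK M r X0 s0 f0 hs0 hf0 B).
Qed.
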